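(* For $1\le\ell\le r$ let \[ F_\ell(n)=z_\ell^n n^{q_\ell}\prod_{j=1}^{m_\ell}\mathcal H_{\alpha_{\ell,j}}(p_{\ell,j}n)^{e_{\ell,j}}, \] where $z_\ell,q_\ell\in\mathbb C$, $p_{\ell,j}\in\mathbb Z_{>0}$, $e_{\ell,j}\in\mathbb Z_{\ge0}$ and each $\alpha_{\ell,j}$ is a word. Let $L=\operatorname{lcm}\{p_{\ell,j}\}$ (with $L=1$ if this set is empty). Then for every positive integer $k$, \[ S_r(k)=\sum_{n_r=1}^{k}\sum_{n_{r-1}=1}^{n_r}\cdots\sum_{n_1=1}^{n_2}\prod_{\ell=1}^{r}F_\ell(n_\ell)\in\operatorname{span}_{\mathbb C}\{\mathcal H_\beta(Lk)\}_\beta, \] where $\beta$ ranges over words.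
   Context: A letter is a pair $(r,s)\in\mathbb C^2$ and a word is a finite sequence of letters. For a word $\alpha=((r_1,s_1),\ldots,(r_d,s_d))$ and a positive integer $N$, \[ \mathcal H_{\alpha}(N)=\sum_{N\ge n_1>\cdots>n_d\ge1}\prod_{i=1}^{d}\frac{s_i^{n_i}}{n_i^{r_i}},\qquad \mathcal H_\emptyset(N)=1, \] with $n^r=\exp(r\log n)$ using the real logarithm. *)

(* Defs.v *)
From Stdlib Require Import Reals List Arith.
From Coquelicot Require Import Coquelicot.
Import ListNotations.
Open Scope R_scope.

Definition letter : Type := (C * C)%type.
Definition word : Type := list letter.

Fixpoint Cpow_nat (s : C) (n : nat) : C :=
  match n with
  | O => RtoC 1
  | S m => Cmult s (Cpow_nat s m)
  end.

Definition Cpow_real (n : nat) (r : C) : C :=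
  let l := ln (INR n) in
  Cmult (RtoC (exp (Re r * l))) (cos (Im r * l), sin (Im r * l)).

Definition sum1 (N : nat) (f : nat -> C) : C :=
  fold_right Cplus (RtoC 0) (map f (seq 1 N)).

Definition prodl (l : list nat) (f : nat -> C) : C :=
  fold_right Cmult (RtoC 1) (map f l).

(* H_alpha(N) = sum_{N >= n_1 > ... > n_d >= 1} prod_i s_i^{n_i} / n_i^{r_i},
   computed by peeling off the outermost index n_1. *)
Fixpoint H (alpha : word) (N : nat) : C :=
  match alpha with
  | [] => RtoC 1
  | (r, s) :: rest =>
      sum1 N (fun n => Cmult (Cdiv (Cpow_nat s n) (Cpow_real n r)) (H rest (n - 1)))
  end.

Definition Fl (z q : nat -> C) (m : nat -> nat) (alpha : nat -> nat -> word)
    (p e : nat -> nat -> nat) (l n : nat) : C :=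
  Cmult (Cmult (Cpow_nat (z l) n) (Cpow_real n (q l)))
        (prodl (seq 1 (m l)) (fun j => Cpow_nat (H (alpha l j) (p l j * n)) (e l j))).

(* Nested sum: G_0(N) = 1, G_l(N) = sum_{n=1}^{N} F_l(n) G_{l-1}(n); so
   S_r(k) = G_r(k) = sum_{n_r=1}^{k} sum_{n_{r-1}=1}^{n_r} ... sum_{n_1=1}^{n_2} prod_l F_l(n_l). *)
Fixpoint nested (F : nat -> nat -> C) (l : nat) (N : nat) : C :=
  match l with
  | O => RtoC 1
  | S l' => sum1 N (fun n => Cmult (F (S l') n) (nested F l' n))
  end.

Definition Llcm (r : nat) (m : nat -> nat) (p : nat -> nat -> nat) : nat :=
  fold_right Nat.lcm 1%nat
    (flat_map (fun l => map (fun j => p l j) (seq 1 (m l))) (seq 1 r)).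

Definition Hcomb (cs : list (C * word)) (N : nat) : C :=
  fold_right Cplus (RtoC 0) (map (fun cb => Cmult (fst cb) (H (snd cb) N)) cs).

(* Main.v *)
Require Import Defs.
From Stdlib Require Import Reals List Arith Lia Lra.
From Coquelicot Require Import Coquelicot.
Import ListNotations.
Open Scope C_scope.

Lemma sum1_0 f : sum1 0 f = 0.
Proof. reflexivity. Qed.

Lemma sum1_S N f : sum1 (S N) f = sum1 N f + f (S N).
Proof.
  unfold sum1. rewrite seq_S, map_app, fold_right_app. simpl.
  generalize (f (S N)). intro c.
  induction (map f (seq 1 N)) as [|a l IH]; simpl.
  - rewrite Cplus_0_r, Cplus_0_l. reflexivity.
  - rewrite IH. ring.
Qed.

Lemma sum1_ext N f g : (forall n, (1 <= n <= N)%nat -> f n = g n) -> sum1 N f = sum1 N g.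
Proof.
  induction N; intros Hfg; [reflexivity|].
  rewrite !sum1_S, IHN, Hfg; [reflexivity|lia|intros; apply Hfg; lia].
Qed.

Lemma sum1_add N f g : sum1 N (fun n => f n + g n) = sum1 N f + sum1 N g.
Proof. induction N; [rewrite !sum1_0; ring|]. rewrite !sum1_S, IHN. ring. Qed.

Lemma sum1_scal N c f : sum1 N (fun n => c * f n) = c * sum1 N f.
Proof. induction N; [rewrite !sum1_0; ring|]. rewrite !sum1_S, IHN. ring. Qed.

Lemma sum1_zero N : sum1 N (fun _ => 0) = 0.
Proof. induction N; [reflexivity|]. rewrite sum1_S, IHN. ring. Qed.

Definition lt (x : letter) (n : nat) : C := Cdiv (Cpow_nat (snd x) n) (Cpow_real n (fst x)).

Lemma H_cons x b N : H (x :: b) N = sum1 N (fun n => lt x n * H b (n - 1)).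
Proof. destruct x; reflexivity. Qed.

Lemma H_cons_S x b N : H (x :: b) (S N) = H (x :: b) N + lt x (S N) * H b N.
Proof. rewrite !H_cons, sum1_S. simpl. rewrite Nat.sub_0_r. reflexivity. Qed.

Lemma H_nil N : H [] N = 1.
Proof. reflexivity. Qed.

Lemma Hcomb_nil N : Hcomb [] N = 0.
Proof. reflexivity. Qed.

Lemma Hcomb_cons cb cs N : Hcomb (cb :: cs) N = fst cb * H (snd cb) N + Hcomb cs N.
Proof. reflexivity. Qed.

Lemma Hcomb_app cs ds N : Hcomb (cs ++ ds) N = Hcomb cs N + Hcomb ds N.
Proof. induction cs; simpl; [rewrite Hcomb_nil; ring|]. rewrite !Hcomb_cons, IHcs. ring. Qed.

Lemma Hcomb_scal c cs N :
  Hcomb (map (fun cb => (c * fst cb, snd cb)) cs) N = c * Hcomb cs N.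
Proof. induction cs; [simpl; rewrite Hcomb_nil; ring|]. rewrite map_cons, !Hcomb_cons, IHcs. simpl. ring. Qed.

Definition inspan (f : nat -> C) := exists cs, forall N, f N = Hcomb cs N.

Lemma inspan_ext f g : (forall N, f N = g N) -> inspan f -> inspan g.
Proof. intros E [cs Hc]. exists cs. intros; rewrite <- E; auto. Qed.

Lemma inspan_H b : inspan (H b).
Proof. exists [(RtoC 1, b)]. intros N. rewrite Hcomb_cons, Hcomb_nil. simpl. ring. Qed.

Lemma inspan_0 : inspan (fun _ => 0).
Proof. exists []. reflexivity. Qed.

Lemma inspan_1 : inspan (fun _ => 1).
Proof. apply (inspan_H []). Qed.

Lemma inspan_add f g : inspan f -> inspan g -> inspan (fun N => f N + g N).
Proof. intros [cs Hc] [ds Hd]. exists (cs ++ ds). intros; rewrite Hcomb_app, Hc, Hd; auto. Qed.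

Lemma inspan_scal c f : inspan f -> inspan (fun N => c * f N).
Proof. intros [cs Hc]. exists (map (fun cb => (c * fst cb, snd cb)) cs). intros; rewrite Hcomb_scal, Hc; auto. Qed.

Lemma inspan_Hcomb cs : inspan (Hcomb cs).
Proof. exists cs; auto. Qed.

Lemma inspan_lin (P : (nat -> C) -> Prop) :
  (forall f g, (forall N, f N = g N) -> P f -> P g) ->
  P (fun _ => 0) ->
  (forall c b f, P f -> P (fun N => c * H b N + f N)) ->
  forall f, inspan f -> P f.
Proof.
  intros Pext P0 Pstep f [cs Hc].
  apply (Pext (Hcomb cs)); [intros; auto|].
  clear Hc. induction cs as [|[c b] cs IH].
  - apply (Pext (fun _ => 0)); auto.
  - apply (Pext (fun N => c * H b N + Hcomb cs N)); [intros; reflexivity|]. auto.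
Qed.

Lemma prefix_shift x f : inspan f -> inspan (fun N => sum1 N (fun n => lt x n * f (n - 1)%nat)).
Proof.
  revert f. apply inspan_lin.
  - intros f g E Hf. eapply inspan_ext; [|exact Hf]. intros N. apply sum1_ext. intros; rewrite E; auto.
  - eapply inspan_ext; [|apply inspan_0]. intros N. symmetry. rewrite (sum1_ext N _ (fun _ => 0)); [apply sum1_zero|intros; ring].
  - intros c b f Hf. eapply inspan_ext; [|apply inspan_add; [apply (inspan_scal c), (inspan_H (x :: b))|exact Hf]].
    intros N. cbv beta. rewrite H_cons, <- sum1_scal, <- sum1_add. apply sum1_ext. intros; ring.
Qed.

Definition cpr (l : R) (r : C) : C :=
  Cmult (RtoC (exp (Re r * l))) (cos (Im r * l), sin (Im r * l)).

Lemma Cpow_real_cpr n r : Cpow_real n r = cpr (ln (INR n)) r.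
Proof. reflexivity. Qed.

Lemma cpr_add_l l1 l2 r : cpr (l1 + l2) r = cpr l1 r * cpr l2 r.
Proof.
  destruct r as [a b]. unfold cpr, Cmult, RtoC, Re, Im; simpl.
  rewrite !Rmult_plus_distr_l, exp_plus, cos_plus, sin_plus. f_equal; ring.
Qed.

Lemma cpr_add_r l a b : cpr l (a + b) = cpr l a * cpr l b.
Proof.
  destruct a as [a1 a2], b as [b1 b2]. unfold cpr, Cmult, Cplus, RtoC, Re, Im; simpl.
  rewrite !Rmult_plus_distr_r, exp_plus, cos_plus, sin_plus. f_equal; ring.
Qed.

Lemma cpr_0 l : cpr l 0 = 1.
Proof.
  unfold cpr, Cmult, RtoC, Re, Im; simpl. rewrite !Rmult_0_l, exp_0, cos_0, sin_0.
  f_equal; ring.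
Qed.

Lemma cpr_nz l r : cpr l r <> 0.
Proof.
  unfold cpr, Cmult, RtoC, Re, Im; simpl. intros E.
  injection E as E1 E2.
  set (t := (snd r * l)%R) in *. set (u := exp (fst r * l)) in *.
  assert (Hu : 0 < u) by apply exp_pos.
  assert (Hc : cos t = 0) by (apply (Rmult_eq_reg_l u); [lra|lra]).
  assert (Hs : sin t = 0) by (apply (Rmult_eq_reg_l u); [lra|lra]).
  pose proof (sin2_cos2 t) as S. unfold Rsqr in S. rewrite Hc, Hs in S. lra.
Qed.

Lemma Cpow_real_nz n r : Cpow_real n r <> 0.
Proof. apply cpr_nz. Qed.

Lemma Cpow_real_add n a b : Cpow_real n (a + b) = Cpow_real n a * Cpow_real n b.
Proof. apply cpr_add_r. Qed.

Lemma Cpow_real_mul n k r : (1 <= n)%nat -> (1 <= k)%nat ->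
  Cpow_real (n * k) r = Cpow_real n r * Cpow_real k r.
Proof.
  intros Hn Hk. rewrite !Cpow_real_cpr, mult_INR, ln_mult.
  - apply cpr_add_l.
  - apply lt_0_INR; lia.
  - apply lt_0_INR; lia.
Qed.

Lemma Cpow_nat_mul s t n : Cpow_nat (s * t) n = Cpow_nat s n * Cpow_nat t n.
Proof. induction n; simpl; [ring|]. rewrite IHn. ring. Qed.

Lemma Cpow_nat_add s a b : Cpow_nat s (a + b) = Cpow_nat s a * Cpow_nat s b.
Proof. induction a; simpl; [ring|]. rewrite IHa. ring. Qed.

Lemma Cpow_nat_pow s a b : Cpow_nat s (a * b) = Cpow_nat (Cpow_nat s a) b.
Proof.
  induction b; simpl. - rewrite Nat.mul_0_r. reflexivity.
  - rewrite Nat.mul_succ_r, Cpow_nat_add, IHb. ring.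
Qed.

Definition lmul (x y : letter) : letter := (fst x + fst y, snd x * snd y).

Lemma lt_mul x y n : lt (lmul x y) n = lt x n * lt y n.
Proof.
  unfold lt, lmul; simpl. rewrite Cpow_nat_mul, Cpow_real_add.
  pose proof (Cpow_real_nz n (fst x)). pose proof (Cpow_real_nz n (fst y)).
  field. auto.
Qed.

Lemma sum_H_unshift x b N :
  sum1 N (fun n => lt x n * H b n) =
  H (x :: b) N + match b with [] => 0 | y :: b' => H (lmul x y :: b') N end.
Proof.
  destruct b as [|y b'].
  - rewrite H_cons, Cplus_0_r. apply sum1_ext. intros; reflexivity.
  - rewrite !H_cons, <- sum1_add. apply sum1_ext. intros n Hn.
    destruct n as [|n']; [lia|]. rewrite H_cons_S. simpl. rewrite Nat.sub_0_r, lt_mul. ring.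
Qed.

Lemma prefix_unshift x f : inspan f -> inspan (fun N => sum1 N (fun n => lt x n * f n)).
Proof.
  revert f. apply inspan_lin.
  - intros f g E Hf. eapply inspan_ext; [|exact Hf]. intros N. apply sum1_ext. intros; cbv beta; rewrite E; auto.
  - eapply inspan_ext; [|apply inspan_0]. intros N. symmetry.
    rewrite (sum1_ext N _ (fun _ => 0)); [apply sum1_zero|intros; ring].
  - intros c b f Hf.
    eapply inspan_ext; [|apply inspan_add; [apply (inspan_scal c (fun N => sum1 N (fun n => lt x n * H b n)))|exact Hf]].
    + intros N. cbv beta. rewrite <- sum1_scal, <- sum1_add. apply sum1_ext. intros; ring.
    + eapply inspan_ext; [intros N; symmetry; apply sum_H_unshift|].
      apply inspan_add; [apply inspan_H|]. destruct b; [apply inspan_0|apply inspan_H].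
Qed.

Definition W (ws : list (C * letter)) (n : nat) : C :=
  fold_right Cplus 0 (map (fun cx => fst cx * lt (snd cx) n) ws).

Lemma weighted ws f : inspan f -> inspan (fun N => sum1 N (fun n => W ws n * f n)).
Proof.
  intros Hf. induction ws as [|[c x] ws IH].
  - eapply inspan_ext; [|apply inspan_0]. intros N. symmetry.
    rewrite (sum1_ext N _ (fun _ => 0)); [apply sum1_zero|intros; unfold W; simpl; ring].
  - eapply inspan_ext; [|apply inspan_add; [apply (inspan_scal c), (prefix_unshift x _ Hf)|exact IH]].
    intros N. cbv beta. rewrite <- sum1_scal, <- sum1_add. apply sum1_ext. intros; unfold W; simpl; ring.
Qed.

Lemma weighted_shift ws f : inspan f -> inspan (fun N => sum1 N (fun n => W ws n * f (n - 1)%nat)).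
Proof.
  intros Hf. induction ws as [|[c x] ws IH].
  - eapply inspan_ext; [|apply inspan_0]. intros N. symmetry.
    rewrite (sum1_ext N _ (fun _ => 0)); [apply sum1_zero|intros; unfold W; simpl; ring].
  - eapply inspan_ext; [|apply inspan_add; [apply (inspan_scal c), (prefix_shift x _ Hf)|exact IH]].
    intros N. cbv beta. rewrite <- sum1_scal, <- sum1_add. apply sum1_ext. intros; unfold W; simpl; ring.
Qed.

Lemma stuffle_id x a y b N :
  H (x :: a) N * H (y :: b) N =
  sum1 N (fun n => lt x n * (H a (n - 1) * H (y :: b) (n - 1))
                 + lt y n * (H (x :: a) (n - 1) * H b (n - 1))
                 + lt (lmul x y) n * (H a (n - 1) * H b (n - 1))).
Proof.
  induction N.
  - rewrite !H_cons, !sum1_0. ring.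
  - rewrite !H_cons_S, sum1_S, <- IHN. simpl. rewrite Nat.sub_0_r, lt_mul. ring.
Qed.

Lemma Hprod a b : inspan (fun N => H a N * H b N).
Proof.
  revert b. induction a as [|x a IHa]; intros b.
  - eapply inspan_ext; [|apply (inspan_H b)]. intros; rewrite H_nil; ring.
  - induction b as [|y b IHb].
    + eapply inspan_ext; [|apply (inspan_H (x :: a))]. intros; rewrite H_nil; ring.
    + eapply inspan_ext; [intros N; symmetry; apply stuffle_id|].
      eapply inspan_ext; [intros N; symmetry; apply sum1_add|].
      apply inspan_add; [|apply (prefix_shift (lmul x y) _ (IHa b))].
      eapply inspan_ext; [intros N; symmetry; apply sum1_add|].
      apply inspan_add; [apply (prefix_shift x _ (IHa (y :: b)))|apply (prefix_shift y _ IHb)].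
Qed.

Lemma inspan_mul f g : inspan f -> inspan g -> inspan (fun N => f N * g N).
Proof.
  intros Hf Hg. revert f Hf.
  apply (inspan_lin (fun f => inspan (fun N => f N * g N))).
  - intros f1 f2 E P. eapply inspan_ext; [|exact P]. intros; cbv beta; rewrite E; auto.
  - eapply inspan_ext; [|apply inspan_0]. intros; cbv beta; ring.
  - intros c b f P.
    assert (Hb : inspan (fun N => H b N * g N)).
    { clear P. revert g Hg. apply (inspan_lin (fun g => inspan (fun N => H b N * g N))).
      - intros g1 g2 E Q. eapply inspan_ext; [|exact Q]. intros; cbv beta; rewrite E; auto.
      - eapply inspan_ext; [|apply inspan_0]. intros; cbv beta; ring.
      - intros c' b' g Q. eapply inspan_ext; [|apply inspan_add; [apply (inspan_scal c'), (Hprod b b')|exact Q]].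
        intros; cbv beta; ring. }
    eapply inspan_ext; [|apply inspan_add; [apply (inspan_scal c), Hb|exact P]].
    intros; cbv beta; ring.
Qed.

Lemma inspan_pow f e : inspan f -> inspan (fun N => Cpow_nat (f N) e).
Proof.
  intros Hf. induction e; simpl.
  - apply inspan_1.
  - apply inspan_mul; auto.
Qed.

Definition ce (a : R) : C := (cos a, sin a).

Lemma ce_mul a b : ce a * ce b = ce (a + b).
Proof. unfold ce, Cmult; simpl. rewrite cos_plus, sin_plus. f_equal; ring. Qed.

Lemma ce_0 : ce 0 = 1.
Proof. unfold ce. rewrite cos_0, sin_0. reflexivity. Qed.

Lemma ce_pow a n : Cpow_nat (ce a) n = ce (INR n * a).
Proof.
  induction n.
  - simpl. rewrite Rmult_0_l, ce_0. reflexivity.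
  - simpl Cpow_nat. rewrite IHn, ce_mul, S_INR. f_equal. ring.
Qed.

Lemma Cpow_nat_RtoC u n : Cpow_nat (RtoC u) n = RtoC (u ^ n).
Proof. induction n; simpl; [reflexivity|]. rewrite IHn, RtoC_mult. reflexivity. Qed.

Lemma root_exists (s : C) (d : nat) : (1 <= d)%nat -> exists t, Cpow_nat t d = s.
Proof.
  intros Hd.
  destruct (Req_dec (Cmod s) 0) as [H0|Hnz].
  - exists 0. apply Cmod_eq_0 in H0. subst s. destruct d; [lia|]. simpl. ring.
  - assert (Hr : (0 < Cmod s)%R) by (pose proof (Cmod_ge_0 s); lra).
    destruct s as [a b]. set (rho := Cmod (a, b)) in *.
    assert (Hrho2 : (rho * rho = a * a + b * b)%R).
    { unfold rho, Cmod; simpl. rewrite sqrt_sqrt; [ring|nra]. }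
    set (c := (a / rho)%R).
    assert (Hc : (-1 <= c <= 1)%R).
    { unfold c. split.
      - apply (Rmult_le_reg_r rho); auto. field_simplify; try lra; nra.
      - apply (Rmult_le_reg_r rho); auto. field_simplify; try lra; nra. }
    assert (Hsin : sin (acos c) = (Rabs b / rho)%R).
    { rewrite sin_acos; auto. replace (1 - c²)%R with ((b / rho)²).
      - rewrite sqrt_Rsqr_abs. unfold Rdiv. rewrite Rabs_mult, Rabs_inv, (Rabs_right rho); [reflexivity|lra].
      - unfold Rsqr, c. field_simplify; try lra. f_equal. replace (rho ^ 2)%R with (rho * rho)%R by ring. rewrite Hrho2. ring. }
    set (th := if Rle_dec 0 b then acos c else (- acos c)%R).
    assert (Hcs : cos th = c /\ sin th = (b / rho)%R).
    { unfold th. destruct (Rle_dec 0 b).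
      - rewrite cos_acos, Hsin, Rabs_right; auto. lra.
      - rewrite cos_neg, sin_neg, cos_acos, Hsin, Rabs_left; auto. 2: lra. split; auto. field. lra. }
    set (u := Rpower rho (/ INR d)).
    exists (RtoC u * ce (th / INR d)).
    rewrite Cpow_nat_mul, Cpow_nat_RtoC, ce_pow.
    assert (Hd' : (0 < INR d)%R) by (apply lt_0_INR; lia).
    replace (INR d * (th / INR d))%R with th by (field; lra).
    replace (u ^ d)%R with rho.
    + destruct Hcs as [H1 H2]. unfold ce. rewrite H1, H2. unfold c, Cmult, RtoC; simpl.
      f_equal; field; lra.
    + unfold u. rewrite <- Rpower_pow by (apply exp_pos).
      rewrite Rpower_mult, Rinv_l by lra. rewrite Rpower_1; auto.
Qed.

Definition sumC {A} (l : list A) (g : A -> C) : C := fold_right Cplus 0 (map g l).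

Lemma sumC_scal {A} (l : list A) K g : sumC l (fun i => K * g i) = K * sumC l g.
Proof. induction l; unfold sumC in *; simpl; [ring|]. rewrite IHl. ring. Qed.

Lemma sumC_ext {A} (l : list A) g h : (forall i, g i = h i) -> sumC l g = sumC l h.
Proof. intros E. induction l; unfold sumC in *; simpl; auto. rewrite IHl, E. reflexivity. Qed.

Lemma sumC_seq_S n g : sumC (seq 0 (S n)) g = sumC (seq 0 n) g + g n.
Proof.
  unfold sumC. rewrite seq_S, map_app, fold_right_app. simpl.
  generalize (g n). intro c.
  induction (map g (seq 0 n)) as [|a l IH]; simpl.
  - ring.
  - rewrite IH. ring.
Qed.

Lemma geom z n : (z - 1) * sumC (seq 0 n) (fun i => Cpow_nat z i) = Cpow_nat z n - 1.
Proof.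
  induction n.
  - unfold sumC; simpl. ring.
  - rewrite sumC_seq_S.
    transitivity ((z - 1) * sumC (seq 0 n) (fun i => Cpow_nat z i) + (z - 1) * Cpow_nat z n); [ring|].
    rewrite IHn. simpl. ring.
Qed.

Lemma sumC_const n : sumC (seq 0 n) (fun _ => 1) = RtoC (INR n).
Proof.
  induction n.
  - reflexivity.
  - rewrite sumC_seq_S, IHn, S_INR, <- RtoC_plus. reflexivity.
Qed.

Lemma Cpow_nat_one n : Cpow_nat 1 n = 1.
Proof. induction n; simpl; [reflexivity|]. rewrite IHn. ring. Qed.

Definition omega (d : nat) : C := ce (2 * PI / INR d).

Lemma omega_d d : (1 <= d)%nat -> Cpow_nat (omega d) d = 1.
Proof.
  intros Hd. unfold omega. rewrite ce_pow.
  assert (Hd' : (0 < INR d)%R) by (apply lt_0_INR; lia).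
  replace (INR d * (2 * PI / INR d))%R with (2 * PI)%R by (field; lra).
  unfold ce. rewrite cos_2PI, sin_2PI. reflexivity.
Qed.

Lemma omega_ne1 d k : (0 < k < d)%nat -> Cpow_nat (omega d) k <> 1.
Proof.
  intros Hk. unfold omega. rewrite ce_pow. unfold ce. intros E.
  injection E as E1 E2.
  assert (Hd' : (0 < INR d)%R) by (apply lt_0_INR; lia).
  assert (Hkd : (0 < INR k < INR d)%R) by (split; [apply lt_0_INR|apply lt_INR]; lia).
  set (a := (INR k * PI / INR d)%R).
  assert (Ha : (0 < a < PI)%R).
  { unfold a. pose proof PI_RGT_0. split.
    - apply Rdiv_lt_0_compat; nra.
    - apply (Rmult_lt_reg_r (INR d)); auto. field_simplify; try lra. nra. }
  replace (INR k * (2 * PI / INR d))%R with (2 * a)%R in E1 by (unfold a; field; lra).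
  rewrite cos_2a_sin in E1. pose proof (sin_gt_0 a (proj1 Ha) (proj2 Ha)). nra.
Qed.

Lemma unity_sum d m : (1 <= d)%nat ->
  sumC (seq 0 d) (fun i => Cpow_nat (Cpow_nat (omega d) i) m) =
  if (m mod d =? 0)%nat then RtoC (INR d) else 0.
Proof.
  intros Hd.
  rewrite (sumC_ext _ _ (fun i => Cpow_nat (Cpow_nat (omega d) m) i)).
  2:{ intros i. rewrite <- !Cpow_nat_pow, Nat.mul_comm. reflexivity. }
  set (z := Cpow_nat (omega d) m).
  assert (Hz : z = Cpow_nat (omega d) (m mod d)).
  { unfold z. rewrite (Nat.div_mod_eq m d) at 1. rewrite Cpow_nat_add, Cpow_nat_pow, omega_d, Cpow_nat_one; auto. ring. }
  destruct (Nat.eqb_spec (m mod d) 0) as [E|E].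
  - rewrite E in Hz. simpl in Hz. rewrite Hz. rewrite (sumC_ext _ _ (fun _ => 1)).
    + apply sumC_const.
    + intros; apply Cpow_nat_one.
  - assert (Hz1 : z <> 1).
    { rewrite Hz. apply omega_ne1. split; [lia|]. apply Nat.mod_upper_bound. lia. }
    assert (Hzd : Cpow_nat z d = 1).
    { unfold z. rewrite <- Cpow_nat_pow, Nat.mul_comm, Cpow_nat_pow, omega_d; auto. apply Cpow_nat_one. }
    pose proof (geom z d) as G. rewrite Hzd in G.
    assert (Hz1' : z - 1 <> 0).
    { intros C0. apply Hz1. replace z with ((z - 1) + 1) by ring. rewrite C0. ring. }
    transitivity (((z - 1) * sumC (seq 0 d) (fun i => Cpow_nat z i)) / (z - 1)); [field; auto|].
    rewrite G. field; auto.
Qed.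

Lemma W_map (l : list nat) K h m :
  W (map (fun i => (K, h i)) l) m = K * sumC l (fun i => lt (h i) m).
Proof.
  induction l; unfold W, sumC in *; simpl; [ring|]. rewrite IHl. ring.
Qed.

Lemma INR_C_nz d : (1 <= d)%nat -> RtoC (INR d) <> 0.
Proof.
  intros Hd E. injection E as E. assert (0 < INR d)%R by (apply lt_0_INR; lia). lra.
Qed.

Lemma RU d x : (1 <= d)%nat -> exists ws, forall m, (1 <= m)%nat ->
  (if (m mod d =? 0)%nat then lt x (m / d) else 0) = W ws m.
Proof.
  intros Hd. destruct x as [r s]. destruct (root_exists s d Hd) as [t Ht].
  exists (map (fun i => (Cpow_real d r / RtoC (INR d), (r, Cpow_nat (omega d) i * t))) (seq 0 d)).
  intros m Hm. rewrite W_map.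
  rewrite (sumC_ext _ _ (fun i => (Cpow_nat t m / Cpow_real m r) * Cpow_nat (Cpow_nat (omega d) i) m)).
  2:{ intros i. unfold lt; simpl. rewrite Cpow_nat_mul. pose proof (Cpow_real_nz m r). field. auto. }
  rewrite sumC_scal, unity_sum by auto.
  destruct (Nat.eqb_spec (m mod d) 0) as [E|E].
  - pose proof (Nat.div_mod_eq m d) as Hdm. rewrite E, Nat.add_0_r in Hdm.
    set (c := (m / d)%nat) in *.
    assert (Hc : (1 <= c)%nat) by (destruct c; lia).
    rewrite Hdm at 1 2. rewrite Cpow_nat_pow, Ht, Cpow_real_mul by auto.
    unfold lt; simpl.
    pose proof (Cpow_real_nz d r). pose proof (Cpow_real_nz c r). pose proof (INR_C_nz d Hd).
    field. auto.
  - ring.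
Qed.

Lemma reindex d g j : (1 <= d)%nat ->
  sum1 (j / d) g = sum1 j (fun m => if (m mod d =? 0)%nat then g (m / d)%nat else 0).
Proof.
  intros Hd. induction j.
  - rewrite Nat.Div0.div_0_l. reflexivity.
  - rewrite sum1_S, <- IHj.
    pose proof (Nat.div_mod_eq j d) as Hj. pose proof (Nat.mod_upper_bound j d ltac:(lia)) as Hr.
    set (q := (j / d)%nat) in *. set (r := (j mod d)%nat) in *.
    destruct (Nat.ltb_spec (r + 1) d) as [Hlt|Hge].
    + assert (E1 : (S j / d = q)%nat) by (symmetry; apply (Nat.div_unique _ _ _ (r + 1)); lia).
      assert (E2 : (S j mod d = r + 1)%nat) by (symmetry; apply (Nat.mod_unique _ _ q); lia).
      rewrite E2, E1. destruct (Nat.eqb_spec (r + 1) 0); [lia|]. ring.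
    + assert (E1 : (S j / d = S q)%nat) by (symmetry; apply (Nat.div_unique _ _ _ 0); lia).
      assert (E2 : (S j mod d = 0)%nat) by (symmetry; apply (Nat.mod_unique _ _ (S q)); lia).
      rewrite E2, E1. simpl. rewrite sum1_S. reflexivity.
Qed.

Lemma refine d a : (1 <= d)%nat -> inspan (fun i => H a (i / d)%nat).
Proof.
  intros Hd. induction a as [|x a IH].
  - apply inspan_1.
  - destruct (RU d x Hd) as [ws Hws].
    eapply inspan_ext; [|apply (weighted_shift ws _ IH)].
    intros N. cbv beta. rewrite H_cons, reindex by auto. apply sum1_ext.
    intros m Hm. rewrite <- Hws by lia.
    destruct (Nat.eqb_spec (m mod d) 0) as [E|E]; [|ring].
    f_equal. f_equal.
    pose proof (Nat.div_mod_eq m d) as Hdm. rewrite E, Nat.add_0_r in Hdm.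
    set (c := (m / d)%nat) in *. assert (1 <= c)%nat by (destruct c; lia).
    symmetry. apply (Nat.div_unique _ _ _ (d - 1)); nia.
Qed.

Lemma divide_fold x l : In x l -> Nat.divide x (fold_right Nat.lcm 1%nat l).
Proof.
  induction l; simpl; [tauto|]. intros [->|Hin].
  - apply Nat.divide_lcm_l.
  - eapply Nat.divide_trans; [apply IHl; auto|apply Nat.divide_lcm_r].
Qed.

Lemma fold_nz l : (forall x, In x l -> x <> 0%nat) -> fold_right Nat.lcm 1%nat l <> 0%nat.
Proof.
  induction l; simpl; intros Hl; [lia|]. rewrite Nat.lcm_eq_0. intros [E|E].
  - apply (Hl a); auto.
  - apply IHl; auto.
Qed.

Lemma lt_neg_q z q n : Cpow_nat z n * Cpow_real n q = lt (Copp q, z) n.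
Proof.
  unfold lt; simpl.
  assert (E : Cpow_real n (Copp q) * Cpow_real n q = 1).
  { rewrite <- Cpow_real_add. replace (Copp q + q) with (RtoC 0) by ring.
    rewrite Cpow_real_cpr. apply cpr_0. }
  pose proof (Cpow_real_nz n (Copp q)).
  transitivity (Cpow_nat z n * (Cpow_real n (Copp q) * Cpow_real n q) / Cpow_real n (Copp q)).
  - field. auto.
  - rewrite E. field. auto.
Qed.

Lemma sum_scale L y Psi : (1 <= L)%nat -> inspan Psi ->
  exists cs, forall k, sum1 k (fun n => lt y n * Psi (L * n)%nat) = Hcomb cs (L * k).
Proof.
  intros HL HPsi. destruct (RU L y HL) as [ws Hws].
  destruct (weighted ws Psi HPsi) as [cs Hcs]. exists cs. intros k. rewrite <- Hcs.
  replace k with ((L * k) / L)%nat at 1 by (rewrite Nat.mul_comm, Nat.div_mul; lia).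
  rewrite reindex by auto. apply sum1_ext. intros mm Hmm. rewrite <- Hws by lia.
  destruct (Nat.eqb_spec (mm mod L) 0) as [E|E]; [|ring].
  pose proof (Nat.div_mod_eq mm L) as Hdm. rewrite E, Nat.add_0_r in Hdm. rewrite <- Hdm. reflexivity.
Qed.

Lemma prod_part (L : nat) (a : nat -> word) (p e : nat -> nat) (J : list nat) :
  (forall j, In j J -> (0 < p j)%nat /\ Nat.divide (p j) L) -> (1 <= L)%nat ->
  exists Phi, inspan Phi /\ forall n,
    prodl J (fun j => Cpow_nat (H (a j) (p j * n)) (e j)) = Phi (L * n)%nat.
Proof.
  intros HJ HL. induction J as [|j J IH].
  - exists (fun _ => 1). split; [apply inspan_1|]. reflexivity.
  - destruct IH as [Phi [HPhi EPhi]]; [intros; apply HJ; simpl; auto|].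
    destruct (HJ j (or_introl eq_refl)) as [Hp [d' Hd']].
    assert (Hd1 : (1 <= d')%nat) by (destruct d'; lia).
    exists (fun i => Cpow_nat (H (a j) (i / d')%nat) (e j) * Phi i). split.
    + apply inspan_mul; auto. apply inspan_pow. apply refine; auto.
    + intros n. unfold prodl in *. simpl. fold (prodl J (fun j => Cpow_nat (H (a j) (p j * n)) (e j))).
      unfold prodl. rewrite EPhi. f_equal. f_equal. f_equal.
      rewrite Hd'. replace (d' * p j * n)%nat with ((p j * n) * d')%nat by ring.
      rewrite Nat.div_mul; lia.
Qed.

Theorem theorem7p1 (r : nat) (z q : nat -> C) (m : nat -> nat)
    (alpha : nat -> nat -> word) (p e : nat -> nat -> nat) :
  (1 <= r)%nat ->
  (forall l j, (1 <= l <= r)%nat -> (1 <= j <= m l)%nat -> (0 < p l j)%nat) ->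
  exists cs : list (C * word),
    forall k : nat, (1 <= k)%nat ->
      nested (Fl z q m alpha p e) r k = Hcomb cs (Llcm r m p * k).
Proof.
  intros Hr Hp.
  set (L := Llcm r m p).
  assert (Hin : forall l j, (1 <= l <= r)%nat -> (1 <= j <= m l)%nat ->
     In (p l j) (flat_map (fun l => map (fun j => p l j) (seq 1 (m l))) (seq 1 r))).
  { intros l j Hl Hj. apply in_flat_map. exists l. split; [apply in_seq; lia|].
    apply in_map. apply in_seq; lia. }
  assert (HL : (1 <= L)%nat).
  { assert (L <> 0%nat); [|lia]. unfold L, Llcm. apply fold_nz.
    intros x Hx. apply in_flat_map in Hx. destruct Hx as [l [Hl Hx]].
    apply in_map_iff in Hx. destruct Hx as [j [<- Hj]]. apply in_seq in Hl, Hj.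
    specialize (Hp l j ltac:(lia) ltac:(lia)). lia. }
  assert (Hdiv : forall l j, (1 <= l <= r)%nat -> (1 <= j <= m l)%nat -> Nat.divide (p l j) L).
  { intros. apply divide_fold. auto. }
  assert (Main : forall l, (l <= r)%nat -> exists cs, forall k,
             nested (Fl z q m alpha p e) l k = Hcomb cs (L * k)).
  { induction l as [|l IH]; intros Hl.
    - exists [(RtoC 1, [])]. intros k. rewrite Hcomb_cons, Hcomb_nil. simpl. ring.
    - destruct (IH ltac:(lia)) as [cs Hcs].
      destruct (prod_part L (alpha (S l)) (p (S l)) (e (S l)) (seq 1 (m (S l)))) as [Phi [HPhi EPhi]]; auto.
      { intros j Hj. apply in_seq in Hj. split; [apply Hp|apply Hdiv]; lia. }
      assert (HPsi : inspan (fun i => Phi i * Hcomb cs i)) by (apply inspan_mul; auto; apply inspan_Hcomb).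
      destruct (sum_scale L (Copp (q (S l)), z (S l)) _ HL HPsi) as [cs' Hcs'].
      exists cs'. intros k. rewrite <- Hcs'.
      simpl nested. apply sum1_ext.
      intros n Hn. unfold Fl. rewrite lt_neg_q, EPhi, Hcs. ring.
  }
  destruct (Main r (le_n r)) as [cs Hcs]. exists cs. intros k _. apply Hcs.
Qed.
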